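(* Let $p$ be a prime and let $\Gamma = \bigoplus_{i \in B_1} \mathbb{Q} \oplus \bigoplus_{i \in B_2} \mathcal{C}(p^\infty)$ for index sets $B_1, B_2$, regarded as a discrete abelian group. If $E \subset \Gamma$ is $p$-PR, then $|E| \le |B_1| + |B_2|$.
   Context: $\mathcal{C}(p^\infty)$ denotes the group of all $p^m$-th roots of unity, $m \ge 1$. For a discrete abelian group $\Delta$ with compact dual $\widehat{\Delta}$ and $N \in \mathbb{N}$, a subset $E \subset \Delta$ is $N$-PR if for every function $\varphi: E \to \mathbb{Z}_N$ (the $N$-th roots of unity in the unit circle) there exists $x \in \widehat{\Delta}$ with $\varphi(\gamma) = \gamma(x)$ for all $\gamma \in E$. *)

(* Defs.v *)
From HB Require Import structures.
From mathcomp Require Import all_boot all_order all_algebra.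
From mathcomp Require Import complex.
From mathcomp Require Import all_classical all_reals.
Set Implicit Arguments. Unset Strict Implicit. Unset Printing Implicit Defensive.
Import Order.TTheory GRing.Theory Num.Theory.
Local Open Scope ring_scope.
Local Open Scope classical_set_scope.
Local Open Scope complex_scope.

(* The unit circle is modelled inside R[i] (complex numbers over a realType R).
   Gamma = (+)_{B1} Q (+) (+)_{B2} C(p^oo) is modelled as the set of pairs
   (f, g) with f : B1 -> rat finitely supported, g : B2 -> R[i] with each g b a
   p^m-th root of unity and g b = 1 for all but finitely many b. *)

Definition Gcar (R : realType) (B1 B2 : Type) : Type :=
  ((B1 -> rat) * (B2 -> R[i]))%type.

Definition in_Cpinf (R : realType) (p : nat) (z : R[i]) : Prop :=
  exists m : nat, (1 <= m)%N /\ z ^+ (p ^ m) = 1.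

Definition in_Gamma (R : realType) (p : nat) (B1 B2 : Type)
  (x : Gcar R B1 B2) : Prop :=
  [/\ finite_set [set b | x.1 b != 0],
      finite_set [set b | x.2 b != 1] &
      forall b, in_Cpinf p (x.2 b)].

Definition Gop (R : realType) (B1 B2 : Type) (x y : Gcar R B1 B2)
  : Gcar R B1 B2 :=
  (fun b => x.1 b + y.1 b, fun b => x.2 b * y.2 b).

Definition is_character (R : realType) (p : nat) (B1 B2 : Type)
  (chi : Gcar R B1 B2 -> R[i]) : Prop :=
  (forall x, in_Gamma p x -> `|chi x| = 1) /\
  (forall x y, in_Gamma p x -> in_Gamma p y ->
     chi (Gop x y) = chi x * chi y).

Definition N_PR (R : realType) (p : nat) (B1 B2 : Type) (N : nat)
  (E : set (Gcar R B1 B2)) : Prop :=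
  forall phi : Gcar R B1 B2 -> R[i],
    (forall g, E g -> phi g ^+ N = 1) ->
    exists chi, is_character p chi /\ forall g, E g -> phi g = chi g.

Arguments in_Gamma {R} p {B1 B2} x.
Arguments is_character {R} p {B1 B2} chi.
Arguments N_PR {R} p {B1 B2} N E.

(* Main.v *)
Require Import Defs.
From HB Require Import structures.
From mathcomp Require Import all_boot all_order all_algebra.
From mathcomp Require Import complex.
From mathcomp Require Import all_classical all_reals.
Local Open Scope classical_set_scope.
Local Open Scope card_scope.
From mathcomp Require Import all_analysis finmap zify ring.
Import Order.TTheory GRing.Theory Num.Theory.
Set Implicit Arguments. Unset Strict Implicit. Unset Printing Implicit Defensive.

Section Hall.
Local Open Scope fset_scope.
Variables (X T : choiceType) (E : set X) (S : X -> {fset T}).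
Definition UU (t : X -> {fset T}) (F : {fset X}) := \bigcup_(x <- F) t x.
Definition hallc (t : X -> {fset T}) := forall F : {fset X},
  (forall x, x \in F -> E x) -> (#|` F| <= #|` UU t F|)%N.
Definition good t := (forall x, t x `<=` S x) /\ hallc t.

Lemma UUP t F y : reflect (exists2 x, x \in F & y \in t x) (y \in UU t F).
Proof.
apply: (iffP (@bigfcupP _ _ _ y t xpredT)) => [[x /andP[xF _] yt]|[x xF yt]];
  by exists x => //; rewrite xF.
Qed.


Hypothesis hS : hallc S.

Lemma notin_sub (A B : {fset T}) y : A `<=` B -> y \notin B -> y \notin A.
Proof. by move=> AB; apply: contra; apply: (fsubsetP AB). Qed.

Lemma UU_sub t t' F : (forall x, x \in F -> t x `<=` t' x) ->
  UU t F `<=` UU t' F.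
Proof.
move=> h; apply/fsubsetP => y /UUP[x xF yt]; apply/UUP; exists x => //.
exact: (fsubsetP (h x xF)).
Qed.

Definition Tt := {t : X -> {fset T} | good t}.
Definition Rr (t s : Tt) : bool := `[< forall x, sval s x `<=` sval t x >].

Lemma chain_refine (A : set Tt) : total_on A Rr -> forall L : seq (X * T),
  (forall xy, xy \in L -> exists2 s, A s & xy.2 \notin sval s xy.1) ->
  exists t0, (t0 = S \/ exists2 s, A s & t0 = sval s) /\
    forall xy, xy \in L -> xy.2 \notin t0 xy.1.
Proof.
move=> tot; elim=> [|[x y] L IH] hL.
  by exists S; split; [left|].
have [s1 As1 ys1] := hL (x, y) (mem_head _ _).
have [t0 [[->|[s0 As0 ->]] Ht0]] :
   exists t0, (t0 = S \/ exists2 s, A s & t0 = sval s) /\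
    forall xy, xy \in L -> xy.2 \notin t0 xy.1.
- by apply: IH => xy xyL; apply: hL; rewrite in_cons xyL orbT.
- exists (sval s1); split; first by right; exists s1.
  move=> xy; rewrite in_cons => /orP[/eqP ->//|xyL].
  exact: (notin_sub ((proj2_sig s1).1 _) (Ht0 _ xyL)).
- have [/asboolP R01|/asboolP R10] := tot s0 s1 As0 As1.
  + exists (sval s1); split; first by right; exists s1.
    move=> xy; rewrite in_cons => /orP[/eqP ->//|xyL].
    exact: (notin_sub (R01 _) (Ht0 _ xyL)).
  + exists (sval s0); split; first by right; exists s0.
    move=> xy; rewrite in_cons => /orP[/eqP ->|xyL]; last exact: Ht0.
    exact: (notin_sub (R10 _) ys1).
Qed.

Lemma chain_ub (A : set Tt) : total_on A Rr ->
  exists u : Tt, forall s, A s -> Rr s u.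
Proof.
move=> tot.
pose ts x := [fset y in S x | `[< forall s, A s -> y \in sval s x >]].
have gts : good ts.
  split=> [x|F FE]; first exact: fset_sub.
  pose L := [seq xy <- [seq (x, y) | x <- F, y <- S x] | xy.2 \notin ts xy.1].
  have hL : forall xy, xy \in L -> exists2 s, A s & xy.2 \notin sval s xy.1.
    move=> [x y]; rewrite mem_filter /= => /andP[yts /allpairsPdep[x' [y' [xF yS e]]]]; case: e => ex ey; subst x' y'.
    move: yts; rewrite /ts !inE yS /= => /asboolPn /existsNP[s /not_implyP[As ys]].
    by exists s => //; apply/negP.
  have [t0 [ht0 Ht0]] := chain_refine tot hL.
  have gt0 : good t0.
    by case: ht0 => [->|[s _ ->]]; [split=> // x; exact: fsubset_refl|exact: (proj2_sig s)].
  apply: (leq_trans (gt0.2 F FE)); apply: fsubset_leq_card; apply: UU_sub.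
  move=> x xF; apply/fsubsetP => y yt0.
  have yS : y \in S x by exact: (fsubsetP (gt0.1 x)).
  apply: contraT => yts.
  have : (x, y) \in L by rewrite mem_filter /= yts; apply/allpairsPdep; exists x, y.
  by move=> /Ht0 /=; rewrite yt0.
exists (exist _ ts gts) => s As; apply/asboolP => x /=.
apply/fsubsetP => y; rewrite !inE => /andP[_ /asboolP]; exact.
Qed.

Lemma hall_max : exists tm : Tt, forall s, Rr tm s -> s = tm.
Proof.
apply: Zorn.
- by move=> t; apply/asboolP => x; exact: fsubset_refl.
- move=> r s t /asboolP rs /asboolP st; apply/asboolP => x.
  exact: fsubset_trans (st x) (rs x).
- move=> [s gs] [t gt] /asboolP /= st /asboolP /= ts.
  have e : s = t by apply: funext => x; apply/eqP; rewrite eqEfsubset ts st.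
  by subst t; congr exist; apply: Prop_irrelevance.
- exact: chain_ub.
Qed.

Definition tupd (t : X -> {fset T}) x a :=
  fun z => if z == x then t x `\ a else t z.

Lemma crit (t : X -> {fset T}) x a : hallc t -> ~ hallc (tupd t x a) ->
  exists P : {fset X}, [/\ forall z, z \in P -> E z, x \notin P &
    (#|` UU t P `|` (t x `\ a)| <= #|` P|)%N].
Proof.
move=> ht /existsNP[F /not_implyP[FE /negP hF]]; rewrite -ltnNge in hF.
have [xF|xF] := boolP (x \in F); last first.
  exfalso; move: (ht F FE); apply/negP; rewrite -ltnNge.
  apply: leq_ltn_trans hF; apply: fsubset_leq_card; apply: UU_sub => z zF.
  rewrite /tupd; case: eqP => [ezx|_]; last exact: fsubset_refl.
  by move: xF; rewrite -ezx zF.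
exists (F `\ x); split.
- by move=> z; rewrite inE => /andP[_ /FE].
- by rewrite !inE eqxx.
have : (#|` UU t (F `\ x) `|` (t x `\ a)| <= #|` UU (tupd t x a) F|)%N.
  apply: fsubset_leq_card; apply/fsubsetP => y; rewrite inE => /orP[/UUP[z zP yz]|yx].
    apply/UUP; exists z; first by move: zP; rewrite inE => /andP[].
    by move: zP; rewrite /tupd !inE => /andP[/negPf -> _].
  by apply/UUP; exists x => //; rewrite /tupd eqxx.
move: hF; rewrite (cardfsD1 x F) xF; lia.
Qed.

Lemma hall (t0 : T) : exists f : X -> T, {in E &, injective f}.
Proof.
have [[tm [tmS htm]] tmax] := hall_max.
have UU1 t x : UU t [fset x] `<=` t x.
  by apply/fsubsetP => y /UUP[z]; rewrite inE => /eqP ->.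
have noh x a : a \in tm x -> ~ hallc (tupd tm x a).
  move=> atm ht'.
  have g' : good (tupd tm x a).
    split=> // z; rewrite /tupd; case: eqP => [->|_] //.
    exact: (fsubset_trans (fsubsetDl _ _) (tmS x)).
  have := tmax (exist _ _ g'); rewrite /Rr /=.
  have -> : `[< forall z, tupd tm x a z `<=` tm z >].
    apply/asboolP => z; rewrite /tupd; case: eqP => [->|_]; last exact: fsubset_refl.
    exact: fsubsetDl.
  move=> /(_ isT) [] /(congr1 (fun t => a \in t x)); rewrite /tupd eqxx !inE eqxx atm.
  by [].
have single x : E x -> exists y, tm x = [fset y].
  move=> Ex; apply/cardfs1P; rewrite eqn_leq; apply/andP; split; last first.
    rewrite -(cardfs1 x); apply: (leq_trans (htm [fset x] _)); last exact: fsubset_leq_card.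
    by move=> z; rewrite inE => /eqP ->.
  rewrite leqNgt; apply/negP => c2.
  have : tm x != fset0 by rewrite -cardfs_gt0; apply: leq_trans c2.
  move=> /fset0Pn[a atm].
  have : tm x `\ a != fset0.
    by rewrite -cardfs_gt0; move: c2; rewrite (cardfsD1 a) atm.
  move=> /fset0Pn[b]; rewrite inE => /andP[ba btm].
  have ab : (a != b) by rewrite eq_sym; move: ba; rewrite inE.
  have [P [PE xP hP]] := crit htm (noh x a atm).
  have [Q [QE xQ hQ]] := crit htm (noh x b btm).
  set A1 := UU tm P `|` (tm x `\ a) in hP.
  set A2 := UU tm Q `|` (tm x `\ b) in hQ.
  have hU : (#|` x |` (P `|` Q)| <= #|` A1 `|` A2|)%N.
    apply: (leq_trans (htm _ _)).
      by move=> z; rewrite !inE => /orP[/eqP->//|/orP[/PE|/QE]].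
    apply: fsubset_leq_card; apply/fsubsetP => y /UUP[z].
    rewrite !inE => /orP[/eqP->|/orP[zP|zQ]] yz.
    + have [eya|nya] := eqVneq y a.
      * by move: yz; rewrite eya => ->; rewrite ab !orbT.
      * by rewrite yz orbT.
    + by apply/orP; left; apply/orP; left; apply/UUP; exists z.
    + by apply/orP; right; apply/orP; left; apply/UUP; exists z.
  have hI : (#|` P `&` Q| <= #|` A1 `&` A2|)%N.
    apply: (leq_trans (htm _ _)).
      by move=> z; rewrite !inE => /andP[/PE].
    apply: fsubset_leq_card; apply/fsubsetP => y /UUP[z].
    rewrite !inE => /andP[zP zQ] yz.
    by apply/andP; split; apply/orP; left; apply/UUP; exists z.
  move: hU; rewrite cardfsU1 !inE negb_or xP xQ /= => hU.
  have := cardfsUI A1 A2; have := cardfsUI P Q; lia.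
have [f hf] : exists f : X -> T, forall x, E x -> tm x = [fset f x].
  have [f hf] := @choice _ _ (fun x y => E x -> tm x = [fset y]) (fun x =>
    match pselect (E x) with
    | left Ex => let: ex_intro y hy := single x Ex in ex_intro _ y (fun _ => hy)
    | right nEx => ex_intro _ t0 (fun h => False_ind _ (nEx h)) end).
  by exists f.
exists f => x x' /set_mem Ex /set_mem Ex' fxx'; apply/eqP; apply: contraT => nxx'.
have FE : forall z, z \in [fset x; x'] -> E z.
  by move=> z; rewrite !inE => /orP[/eqP->|/eqP->].
have := htm _ FE; rewrite cardfs2 nxx'.
have : (#|` UU tm [fset x; x']| <= #|` [fset f x]|)%N.
  apply: fsubset_leq_card; apply/fsubsetP => y /UUP[z].
  by rewrite !inE => /orP[/eqP->|/eqP->]; rewrite ?hf // ?inE fxx'.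
rewrite cardfs1; move=> h1 h2; lia.
Qed.

End Hall.

Section Alg.
Local Open Scope ring_scope.
Variables (F : fieldType) (C : eqType) (Pc : C -> F -> Prop) (p : nat).
Hypothesis pp : prime p.
Hypothesis Pc0 : forall c z, Pc c z -> z != 0.
Hypothesis Pcl : forall c z w (d e : int), Pc c z -> Pc c w -> Pc c (z ^ d * w ^ e).
Hypothesis Pco : forall c n (w : 'I_n.+1 -> F), (forall i, Pc c (w i)) ->
  exists i0, exists d e : 'I_n.+1 -> int,
    (forall i, ~~ (p%:Z %| d i)%Z) /\ forall i, w i ^ d i * w i0 ^ e i = 1.

Definition indep n (v : 'I_n -> C -> F) := forall a : 'I_n -> int,
  (forall c, \prod_i v i c ^ a i = 1) -> forall i, (p%:Z %| a i)%Z.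

Lemma prodz (x : F) m (f : 'I_m -> int) : x != 0 ->
  \prod_(j < m) x ^ f j = x ^ (\sum_(j < m) f j).
Proof.
move=> x0; elim/big_rec2: _ => [|j s1 s2 _ ->]; first by rewrite expr0z.
by rewrite expfzDr.
Qed.

Lemma euclidz (a d : int) : (p%:Z %| a * d)%Z -> ~~ (p%:Z %| d)%Z -> (p%:Z %| a)%Z.
Proof.
rewrite !dvdzE abszM /= Euclid_dvdM // => /orP[//|->] //.
Qed.

Lemma key (U : seq C) : forall n (v : 'I_n -> C -> F),
  (forall i c, c \notin U -> v i c = 1) -> (forall i c, Pc c (v i c)) ->
  indep v -> (n <= size U)%N.
Proof.
elim: U => [|c U IH] [|m] v vU vP hv //=.
  have := hv (fun _ => 1) _ ord0.
  rewrite dvdzE /= dvdn1 => /(_ _)/eqP h; have p1 := prime_gt1 pp.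
  suff : false by [].
  apply/negP => _; move: p1; rewrite h ?ltnn //.
  by move=> c; apply: big1 => i _; rewrite vU // expr1z.
have [i0 [d [e [nd hde]]]] := Pco (fun i => vP i c).
pose y (j : 'I_m) c' := v (lift i0 j) c' ^ d (lift i0 j) * v i0 c' ^ e (lift i0 j).
suff : (m <= size U)%N by [].
apply: (IH m y).
- move=> j c' c'U; rewrite /y; have [->|nc] := eqVneq c' c; first exact: hde.
  by rewrite !vU ?inE ?negb_or ?nc ?exp1rz ?mulr1.
- by move=> j c'; apply: Pcl.
move=> a ha.
pose a' (i : 'I_m.+1) := if unlift i0 i is Some j then a j * d i
  else \sum_(j < m) a j * e (lift i0 j).
suff ha' : forall c', \prod_i v i c' ^ a' i = 1.
  move=> j; apply: (@euclidz _ (d (lift i0 j))) => //.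
  by have := hv a' ha' (lift i0 j); rewrite /a' liftK.
move=> c'; rewrite (bigD1_ord i0) //= /a' unlift_none -[RHS](ha c') /y.
under eq_bigr => j _ do rewrite liftK.
under [in RHS]eq_bigr => j _ do rewrite expfzMl !exprz_exp.
rewrite big_split /= prodz ?(Pc0 (vP i0 c')) // mulrC.
congr (_ * _); first by apply: eq_bigr => j _; rewrite mulrC.
by congr (_ ^ _); apply: eq_bigr => j _; rewrite mulrC.
Qed.

End Alg.

Section Coord.
Local Open Scope ring_scope.
Variables (p : nat).
Hypothesis pp : prime p.

Lemma ndvd1 : ~~ (p%:Z %| 1)%Z.
Proof. by rewrite dvdzE /= dvdn1; have := prime_gt1 pp; case: p => [|[|]]. Qed.

Lemma int_co n (N : 'I_n.+1 -> int) : exists i0, exists d e : 'I_n.+1 -> int,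
  (forall i, ~~ (p%:Z %| d i)%Z) /\ forall i, N i * d i + N i0 * e i = 0.
Proof.
have [/existsP[j0 Nj0]|] := boolP [exists j, N j != 0]; last first.
  move=> h; exists ord0, (fun=> 1), (fun=> 0); split=> [i|i]; first exact: ndvd1.
  have -> : N i = 0.
    by apply/eqP; apply: contraNT h => h; apply/existsP; exists i.
  by rewrite mul0r mulr0 addr0.
case: (@arg_minnP _ j0 (fun i => N i != 0) (fun i => logn p `|N i|) Nj0) => i0 Ni0 hmin.
set k := logn p `|N i0|.
have dv i : ((p ^ k)%:Z %| N i)%Z.
  have [->|Ni] := eqVneq (N i) 0; first exact: dvdz0.
  rewrite dvdzE /= pfactor_dvdn ?absz_gt0 //; exact: hmin.
exists i0, (fun=> (N i0 %/ (p ^ k)%:Z)%Z), (fun i => - (N i %/ (p ^ k)%:Z)%Z).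
split=> [i|i].
  apply/negP => pd.
  have : ((p ^ k.+1)%:Z %| N i0)%Z.
    rewrite -(divzK (dv i0)) expnS PoszM; exact: dvdz_mul pd (dvdzz _).
  rewrite dvdzE /= pfactor_dvdn ?absz_gt0 // ltnn; by [].
rewrite -{2}(divzK (dv i0)) -{1}(divzK (dv i)); ring.
Qed.

Lemma rat_co n (q : 'I_n.+1 -> rat) : exists i0, exists d e : 'I_n.+1 -> int,
  (forall i, ~~ (p%:Z %| d i)%Z) /\ forall i, q i *~ d i + q i0 *~ e i = 0.
Proof.
pose D := \prod_(j < n.+1) denq (q j).
pose N i := numq (q i) * \prod_(j < n.+1 | j != i) denq (q j).
have NE i : (N i)%:~R = q i * D%:~R :> rat.
  by rewrite /N /D [in RHS](bigD1 i) //= !intrM numqE mulrA.  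
have D0 : D%:~R != 0 :> rat.
  rewrite intr_eq0; apply: lt0r_neq0; apply: prodr_gt0 => j _; exact: denq_gt0.
have [i0 [d [e [nd hde]]]] := int_co N.
exists i0, d, e; split=> // i.
have := congr1 (fun z : int => z%:~R : rat) (hde i).
rewrite intrD (intrM _ (N i)) (intrM _ (N i0)) !NE => h.
have h' : (q i *~ d i + q i0 *~ e i) * D%:~R = 0.
  by move: h; rewrite !mulrzr mulr0z => <-; ring.
by apply/eqP; move: h' => /eqP; rewrite mulf_eq0 (negPf D0) orbF.
Qed.

Lemma root_co (F : fieldType) n (z : 'I_n.+1 -> F) :
  (forall i, exists m, z i ^+ (p ^ m) = 1) ->
  exists i0, exists d e : 'I_n.+1 -> int,
  (forall i, ~~ (p%:Z %| d i)%Z) /\ forall i, z i ^ d i * z i0 ^ e i = 1.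
Proof.
move=> hz.
have hz' i : exists m, (fun m => z i ^+ (p ^ m) == 1) m.
  by have [m hm] := hz i; exists m; apply/eqP.
pose k i := ex_minn (hz' i).
have kP i : z i ^+ (p ^ k i) = 1 by rewrite /k; case: ex_minnP => m /eqP.
have kmin i m : z i ^+ (p ^ m) = 1 -> (k i <= m)%N.
  by rewrite /k; case: ex_minnP => m' _ hm /eqP /hm.
case: (@arg_maxnP _ ord0 xpredT k isT) => i0 _ hmax.
have p0 : (0 < p ^ k i0)%N by rewrite expn_gt0 prime_gt0.
have [m' pm' m'dv] := prim_order_exists p0 (kP i0).
have [j jk m'E] := dvdn_pfactor _ _ pp m'dv.
have := prim_expr_order pm'; rewrite m'E => /kmin kj.
have ej : j = k i0 by apply/eqP; rewrite eqn_leq jk kj.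
rewrite m'E ej in pm'.
have hk0 i : z i ^+ (p ^ k i0) = 1.
  have := hmax i isT => /= ki.
  by rewrite -(subnKC ki) expnD exprM kP expr1n.
pose t i := sval (prim_rootP pm' (hk0 i)).
have tE i : z i = z i0 ^+ t i by rewrite /t; case: prim_rootP.
have z0 : z i0 != 0.
  by apply/eqP => z0; have := kP i0; rewrite z0 expr0n eqn0Ngt p0 /= => /esym/eqP; rewrite oner_eq0.
exists i0, (fun=> 1), (fun i => - (t i)%:Z); split=> [i|i]; first exact: ndvd1.
rewrite expr1z -exprnN {1}tE mulfV //; exact: expf_neq0.
Qed.

End Coord.

Section S.
Local Open Scope ring_scope.
Local Open Scope complex_scope. Variable R : realType.
Definition Eq (q : rat) : R[i] := (expR (ratr q : R))%:C.
Lemma EqD q r : Eq (q + r) = Eq q * Eq r.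
Proof. by rewrite /Eq rmorphD expRD rmorphM. Qed.
Lemma Eq0 : Eq 0 = 1.
Proof. by rewrite /Eq rmorph0 expR0. Qed.
Lemma Eq_neq0 q : Eq q != 0.
Proof. rewrite /Eq fmorph_eq0; apply: lt0r_neq0; exact: expR_gt0. Qed.
Lemma Eq_inj q : Eq q = 1 -> q = 0.
Proof.
rewrite /Eq -(rmorph1 (real_complex R)) => /complexI.
rewrite -expR0 => /expR_inj /eqP; rewrite fmorph_eq0 => /eqP //.
Qed.

Lemma EqN q : Eq (- q) = (Eq q)^-1.
Proof.
apply: (@mulfI _ (Eq q)); first exact: Eq_neq0.
by rewrite -EqD subrr Eq0 mulfV // Eq_neq0.
Qed.
Lemma EqMn q n : Eq (q *+ n) = Eq q ^+ n.
Proof. by elim: n => [|n IH]; rewrite ?mulr0n ?Eq0 // mulrS EqD IH exprS. Qed.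
Lemma EqZ q (d : int) : Eq (q *~ d) = Eq q ^ d.
Proof.
case: d => n; first by rewrite EqMn.
by rewrite NegzE mulrNz EqN EqMn.
Qed.

Lemma prim_exists (p : nat) : prime p -> exists w : R[i], p.-primitive_root w.
Proof.
move=> pp; have p1 := prime_gt1 pp.
pose P : {poly R[i]} := \poly_(i < p) 1.
have sP : size P = p by rewrite size_poly_eq // oner_neq0.
have [w rw] : exists w, root P w.
  by apply/closed_rootP; rewrite sP; case: p p1 {pp sP P} => [|[|]].
have hs : \sum_(i < p) w ^+ i = 0.
  by move: rw => /rootP; rewrite horner_poly; under eq_bigr do rewrite mul1r.
have wp : w ^+ p = 1.
  by apply/eqP; rewrite -subr_eq0 subrX1 hs mulr0.
have w1 : w != 1.
  apply/eqP => w1; move: rw => /rootP; rewrite horner_poly w1.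
  under eq_bigr => i _ do rewrite expr1n mulr1.
  by rewrite sumr_const card_ord => /eqP; rewrite pnatr_eq0; case: p p1 {pp sP P wp hs} => [|[|]].
exists w; have [m pm mp] := prim_order_exists (prime_gt0 pp) wp.
have [m1|mp'] : m = 1%N \/ m = p.
  by have [_ /(_ m mp) /orP[/eqP|/eqP]] := primeP pp; [left|right].
  by move: pm; rewrite m1 => /prim_expr_order; rewrite expr1 => w1'; rewrite w1' eqxx in w1.
by rewrite -mp'.
Qed.
End S.

Definition ptd (T : Type) (t : T) : Type := T.
HB.instance Definition _ (T : Type) (t : T) := gen_eqMixin (ptd t).
HB.instance Definition _ (T : Type) (t : T) := gen_choiceMixin (ptd t).
HB.instance Definition _ (T : Type) (t : T) := isPointed.Build (ptd t) t.

Section Glue.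
Local Open Scope ring_scope.
Local Open Scope complex_scope.
Variables (R : realType) (p : nat) (B1 B2 : Type).
Hypothesis pp : prime p.
Local Notation G := (Gcar R B1 B2).
Definition XT := {classic G}.
Definition TT := {classic (B1 + B2)%type}.
Definition e0 : G := (fun _ => 0, fun _ => 1).

Definition Pc (c : TT) (z : R[i]) : Prop := match c with
  | inl _ => exists q, z = Eq R q
  | inr _ => exists m, z ^+ (p ^ m) = 1 end.
Definition emb (x : G) (c : TT) : R[i] := match c with
  | inl b => Eq R (x.1 b) | inr b => x.2 b end.
Definition suppS (x : G) : set TT := [set c | match c with
  | inl b => x.1 b != 0 | inr b => x.2 b != 1 end].
Definition supp (x : G) : {fset TT} := fset_set (suppS x).

Lemma supp_fin x : in_Gamma p x -> finite_set (suppS x).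
Proof.
case=> f1 f2 _.
have -> : suppS x = inl @` [set b | x.1 b != 0] `|` inr @` [set b | x.2 b != 1].
  apply/seteqP; split=> [[b|b] /= h|c [[b h <-]|[b h <-]] //]; by [left; exists b|right; exists b].
by rewrite finite_setU; split; apply: finite_image.
Qed.

Lemma emb_out x c : in_Gamma p x -> c \notin supp x -> emb x c = 1.
Proof.
move=> xG; rewrite /supp in_fset_set; last exact: supp_fin.
move=> /negP cnA; have : ~ suppS x c by move=> h; apply: cnA; apply/mem_set.
case: c {cnA} => b /= /negP; rewrite negbK => /eqP -> //; exact: Eq0.
Qed.


Lemma Cp_ne0 (z : R[i]) : in_Cpinf p z -> z != 0.
Proof.
case=> m [_ hz]; apply/eqP => z0; move: hz; rewrite z0 expr0n.
have -> : (p ^ m == 0)%N = false by rewrite expn_eq0; have := prime_gt0 pp; case: p.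
by move=> /eqP; rewrite eq_sym oner_eq0.
Qed.

Lemma G_e0 : in_Gamma p e0.
Proof.
split=> /=.
- by rewrite (_ : [set b | _] = set0) //; apply/seteqP; split=> b //=; rewrite eqxx.
- by rewrite (_ : [set b | _] = set0) //; apply/seteqP; split=> b //=; rewrite eqxx.
- by move=> b; exists 1%N; rewrite expr1n.
Qed.

Lemma G_op (x y : G) : in_Gamma p x -> in_Gamma p y -> in_Gamma p (Gop x y).
Proof.
case=> fx1 fx2 cx [fy1 fy2 cy]; split=> /=.
- apply: sub_finite_set (_ : finite_set ([set b | x.1 b != 0] `|` [set b | y.1 b != 0])).
    move=> b /=; case: (eqVneq (x.1 b) 0) => [->|h1]; last by left.
    by rewrite add0r => h; right.
  by rewrite finite_setU.
- apply: sub_finite_set (_ : finite_set ([set b | x.2 b != 1] `|` [set b | y.2 b != 1])).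
    move=> b /=; case: (eqVneq (x.2 b) 1) => [->|h1]; last by left.
    by rewrite mul1r => h; right.
  by rewrite finite_setU.
- move=> b; have [m [m1 hm]] := cx b; have [k [k1 hk]] := cy b.
  exists (m + k)%N; split; first by rewrite addn_gt0 m1.
  by rewrite exprMn expnD exprM hm expr1n mulnC exprM hk expr1n mulr1.
Qed.

Lemma chi_e0 (chi : G -> R[i]) : is_character p chi -> chi e0 = 1.
Proof.
case=> c1 cM.
have h : chi e0 = chi e0 * chi e0.
  rewrite -(cM e0 e0 G_e0 G_e0); congr chi; rewrite /Gop /e0 /=.
  by congr (_, _); apply: funext => b; rewrite ?addr0 ?mulr1.
have n0 : chi e0 != 0 by rewrite -normr_eq0 (c1 _ G_e0) oner_eq0.
by apply: (mulfI n0); rewrite -h mulr1.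
Qed.

Definition nscale k (x : G) := iter k (Gop x) e0.

Lemma G_nscale k (x : G) : in_Gamma p x -> in_Gamma p (nscale k x).
Proof. by move=> xG; elim: k => [|k IH] /=; [exact: G_e0|exact: G_op]. Qed.

Lemma chi_nscale (chi : G -> R[i]) k (x : G) : is_character p chi -> in_Gamma p x ->
  chi (nscale k x) = chi x ^+ k.
Proof.
move=> hc xG; elim: k => [|k IH]; first by rewrite expr0 chi_e0.
by rewrite /= (hc.2 _ _ xG (G_nscale k xG)) IH exprS.
Qed.

Lemma nscale1 k x b : (nscale k x).1 b = x.1 b *+ k.
Proof. by elim: k => [|k IH] //=; rewrite IH mulrS. Qed.
Lemma nscale2 k x b : (nscale k x).2 b = x.2 b ^+ k.
Proof. by elim: k => [|k IH] //=; rewrite IH exprS. Qed.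

Definition comb n (xs : 'I_n -> G) (c : 'I_n -> nat) :=
  \big[@Gop R B1 B2/e0]_(i < n) nscale (c i) (xs i).

Lemma comb1 n (xs : 'I_n -> G) c b : (@comb n xs c).1 b = \sum_(i < n) (xs i).1 b *+ c i.
Proof.
rewrite /comb (big_morph (fun g : G => g.1 b) (id1 := 0) (op1 := +%R)) //.
by apply: eq_bigr => i _; rewrite nscale1.
Qed.
Lemma comb2 n (xs : 'I_n -> G) c b : (@comb n xs c).2 b = \prod_(i < n) (xs i).2 b ^+ c i.
Proof.
rewrite /comb (big_morph (fun g : G => g.2 b) (id1 := 1) (op1 := *%R)) //.
by apply: eq_bigr => i _; rewrite nscale2.
Qed.

Lemma chi_comb (chi : G -> R[i]) n (xs : 'I_n -> G) c : is_character p chi -> (forall i, in_Gamma p (xs i)) ->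
  chi (@comb n xs c) = \prod_(i < n) chi (xs i) ^+ c i.
Proof.
move=> hc xG.
suff [] : in_Gamma p (@comb n xs c) /\ chi (comb xs c) = \prod_(i < n) chi (xs i) ^+ c i by [].
rewrite /comb; elim/big_rec2: _ => [|i g z _ [gG <-]].
  by split; [exact: G_e0|exact: chi_e0].
split; first by apply: G_op => //; exact: G_nscale.
by rewrite (hc.2 _ _ (G_nscale (c i) (xG i)) gG) chi_nscale.
Qed.


Lemma step1 (E : set G) (PR : N_PR p p E) n (xs : 'I_n -> G) :
  injective xs -> (forall i, E (xs i)) -> (forall i, in_Gamma p (xs i)) ->
  forall a : 'I_n -> int, (forall c, \prod_i emb (xs i) c ^ a i = 1) ->
  forall j, (p%:Z %| a j)%Z.
Proof.
move=> xinj xE xG a ha j.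
pose ap i : nat := if (0 <= a i) then `|a i|%N else 0%N.
pose an i : nat := if (0 <= a i) then 0%N else `|a i|%N.
have aE i : a i = (ap i)%:Z - (an i)%:Z.
  rewrite /ap /an; case: ifP => h; first by rewrite subr0 gez0_abs.
  by rewrite sub0r ltz0_abs ?opprK // ltNge h.
have Ecomb : comb xs ap = comb xs an.
  rewrite [LHS]surjective_pairing [RHS]surjective_pairing; congr (_, _);
    apply: funext => b.
  - rewrite !comb1; have := ha (inl b); rewrite /emb.
    under eq_bigr do rewrite -EqZ.
    rewrite -(big_morph (Eq R) (@EqD R) (Eq0 R)) => /Eq_inj h0.
    apply/eqP; rewrite -subr_eq0 -sumrB; apply/eqP; rewrite -[RHS]h0.
    have mzn (x : rat) (k : nat) : x *~ k%:Z = x *+ k by [].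
    by apply: eq_bigr => i _; rewrite aE mulrzBr !mzn.
  - rewrite !comb2; have := ha (inr b); rewrite /emb.
    have nz i : (xs i).2 b != 0 by have [_ _ /(_ b) /Cp_ne0] := xG i.
    have zE i : (xs i).2 b ^ a i = (xs i).2 b ^+ ap i / (xs i).2 b ^+ an i.
      by rewrite aE expfzDr ?nz // -exprnN.
    under eq_bigr do rewrite zE.
    rewrite big_split /= prodfV => h.
    have nzP : \prod_(i < n) (xs i).2 b ^+ an i != 0.
      by apply/prodf_neq0 => i _; rewrite expf_neq0 ?nz.
    by rewrite -(divfK nzP (\prod_(i < n) _ ^+ ap i)) h mul1r.
have [w pw] := prim_exists R pp.
pose phi (g : G) := if `[< g = xs j >] then w else 1.
have [chi [hc hag]] : exists chi, is_character p chi /\ forall g, E g -> phi g = chi g.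
  apply: PR => g _; rewrite /phi; case: asboolP => _; last exact: expr1n.
  exact: prim_expr_order.
have chij : chi (xs j) = w by rewrite -hag // /phi; case: asboolP.
have chii i : i != j -> chi (xs i) = 1.
  move=> ij; rewrite -hag // /phi; case: asboolP => // /xinj eij.
  by rewrite eij eqxx in ij.
have := congr1 chi Ecomb; rewrite !(chi_comb _ hc xG) (bigD1 j) // [X in _ = X](bigD1 j) // chij.
have b1 c : \big[*%R/1]_(i < n | true && (i != j)) chi (xs i) ^+ c i = 1.
  by apply: big1 => i /andP[_ ij]; rewrite chii ?expr1n.
rewrite !b1 !Monoid.mulm1 => /eqP; rewrite (eq_prim_root_expr pw).
rewrite dvdzE /ap /an; case: ifP => _ H.
  by move: H; rewrite mod0n /dvdn.
by move: H; rewrite mod0n eq_sym /dvdn.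
Qed.


Lemma Pc0 c z : Pc c z -> z != 0.
Proof.
case: c => b /= [q hq]; first by rewrite hq; exact: Eq_neq0.
apply/eqP => z0; move: hq; rewrite z0 expr0n.
have -> : (p ^ q == 0)%N = false by rewrite expn_eq0; have := prime_gt0 pp; case: p.
by move=> /eqP; rewrite eq_sym oner_eq0.
Qed.

Lemma Pcl c z w (d e : int) : Pc c z -> Pc c w -> Pc c (z ^ d * w ^ e).
Proof.
case: c => b /= [q hq] [r hr].
  by exists (q *~ d + r *~ e); rewrite hq hr EqD !EqZ.
exists (q + r)%N.
have h1 (x : R[i]) (k : int) m : x ^+ (p ^ m) = 1 -> (x ^ k) ^+ (p ^ m) = 1.
  by move=> hx; rewrite -[(x ^ k) ^+ _]/((x ^ k) ^ (p ^ m)%:Z) exprzAC -[x ^ (p ^ m)%:Z]/(x ^+ (p ^ m)) hx exp1rz.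
rewrite exprMn expnD !exprM h1 ?expr1n ?mul1r // -exprM mulnC exprM h1 ?expr1n //.
Qed.



Lemma Pco c n (w : 'I_n.+1 -> R[i]) : (forall i, Pc c (w i)) ->
  exists i0, exists d e : 'I_n.+1 -> int,
    (forall i, ~~ (p%:Z %| d i)%Z) /\ forall i, w i ^ d i * w i0 ^ e i = 1.
Proof.
case: c => b /= hw; last exact: root_co.
have [q hq] := @choice _ _ (fun i q => w i = Eq R q) hw.
have [i0 [d [e [nd hde]]]] := rat_co pp q.
exists i0, d, e; split=> // i.
by rewrite !hq -!EqZ -EqD hde Eq0.
Qed.

Lemma FC (E : set G) (EG : E `<=` in_Gamma p) (PR : N_PR p p E)
  (F : {fset G}) : (forall x, x \in F -> E x) ->
  (#|` F| <= #|` UU supp F|)%N.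
Proof.
move=> FE.
have [->|/fset0Pn[x0 x0F]] := eqVneq F fset0; first by rewrite cardfs0.
pose xs (i : 'I_#|` F|) : G := nth x0 (enum_fset F) i.
have xsF i : xs i \in F by apply: mem_nth.
apply: (@key _ _ Pc p pp Pc0 Pcl Pco (enum_fset (UU supp F)) _ (fun i => emb (xs i))).
- move=> i c cU; apply: emb_out; first exact: EG (FE _ (xsF i)).
  apply: contra cU => cs; apply/UUP; exists (xs i) => //.
- move=> i [b|b] /=; first by exists ((xs i).1 b).
  by have [_ _ /(_ b) [m [_ hm]]] := EG _ (FE _ (xsF i)); exists m.
move=> a ha; apply: (step1 PR) => //.
- move=> i j /eqP; rewrite nth_uniq ?fset_uniq // => /eqP; exact: ord_inj.
- by move=> i; apply: FE.
- by move=> i; apply: EG; apply: FE.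
Qed.

End Glue.

Theorem main_thm (R : realType) (p : nat) (B1 B2 : Type)
  (E : set (Gcar R B1 B2)) :
  prime p ->
  E `<=` in_Gamma p ->
  N_PR p p E ->
  E #<= [set: (B1 + B2)%type].
Proof.
move=> pp EG PR.
have [[x0 Ex0]|nE] := pselect (exists x, E x); last first.
  have -> : E = set0 by apply/seteqP; split=> x // Ex; apply: nE; exists x.
  exact: card_ge0.
have hS := @FC R p B1 B2 pp E EG PR.
have : (0 < #|` UU (@supp R B1 B2) [fset x0]%fset|)%N.
  apply: leq_trans (hS _ _); first by rewrite cardfs1.
  by move=> z; rewrite inE => /eqP ->.
rewrite cardfs_gt0 => /fset0Pn[t0 _].
have [f finj] := @hall _ (TT B1 B2) E (@supp R B1 B2) hS t0.
by apply/(@pcard_injP _ (ptd t0)); exists f.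
Qed.

Unset Implicit Arguments.

Theorem proposition3p6 (R : realType) (p : nat) (B1 B2 : Type)
  (E : set (Gcar R B1 B2)) :
  prime p ->
  E `<=` in_Gamma p ->
  N_PR p p E ->
  E #<= [set: (B1 + B2)%type].
Proof. exact: main_thm. Qed.
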